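(* Let $p$ be a prime and $\mathcal{P}=(\mathbb{Z},\mathbb{Z},\mathbb{Z}_{(p)})$. Then: (1) $\mathcal{P}^1\widehat\Gamma$ is the preimage of $(2\mathbb{Z}^t_{(2)})^2$ under the projection $\widehat\Gamma\to(\mathbb{Z}^t_{(2)})^2\rtimes\mathbb{Z}$ (i.e. the subgroup generated by $\mathbb{Z}_{(2)}/\mathbb{Z}$ and $(2\mathbb{Z}^t_{(2)})^2$), and $\widehat\Gamma/\mathcal{P}^1\widehat\Gamma\cong(\mathbb{Z}/2)^2\times\mathbb{Z}$. (2) $\mathcal{P}^2\widehat\Gamma$ is the central subgroup $\mathbb{Z}_{(2)}/\mathbb{Z}$, and $\widehat\Gamma/\mathcal{P}^2\widehat\Gamma\cong(\mathbb{Z}^t_{(2)})^2\rtimes\mathbb{Z}$. (3) $\mathcal{P}^3\widehat\Gamma$ is the subgroup $(\mathbb{Z}_{(2)}\cap\mathbb{Z}_{(p)})/\mathbb{Z}$ of $\mathcal{P}^2\widehat\Gamma=\mathbb{Z}_{(2)}/\mathbb{Z}$, and $\mathcal{P}^2\widehat\Gamma/\mathcal{P}^3\widehat\Gamma$ is $0$ if $p=2$ and is isomorphic to $\mathbb{Z}[\frac1p]/\mathbb{Z}$ otherwise. Consequently, if $p=2$ then $\widehat\Gamma/\mathcal{P}^3\widehat\Gamma\cong(\mathbb{Z}^t_{(2)})^2\rtimes\mathbb{Z}$, and if $p$ is odd there is a central extension $1\to\mathbb{Z}[\frac1p]/\mathbb{Z}\to\widehat\Gamma/\mathcal{P}^3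\widehat\Gamma\to(\mathbb{Z}^t_{(2)})^2\rtimes\mathbb{Z}\to1$.
   Context: $\Gamma_{2k-1}=\langle x,y,t\mid [x,y]^{(2k-1)^2},\ [[x,y],t],\ [[x,y],x],\ [[x,y],y],\ txt^{-1}=x^{-1},\ tyt^{-1}=y^{-1}\rangle$; for $(2k-1)\mid(2\ell-1)$ the maps $\Gamma_{2k-1}\to\Gamma_{2\ell-1}$, $t\mapsto t$, $x\mapsto x^{(2\ell-1)/(2k-1)}$, $y\mapsto y^{(2\ell-1)/(2k-1)}$ form a direct system with colimit $\widehat\Gamma$ (the integral homology localization of $\Gamma=\Gamma_1$). $\widehat\Gamma$ is a central extension $1\to\mathbb{Z}_{(2)}/\mathbb{Z}\to\widehat\Gamma\to(\mathbb{Z}^t_{(2)})^2\rtimes\mathbb{Z}\to1$, where $\mathbb{Z}_{(2)}=\{a/b\in\mathbb{Q}: b\text{ odd}\}$, $\mathbb{Z}^t_{(2)}$ is $\mathbb{Z}_{(2)}$ with the generator $t$ of $\mathbb{Z}$ acting by $-1$, the central subgroup is the colimit of the subgroups generated by $[x,y]$ (with $[x,y]\in\Gamma_{2k-1}$ corresponding to $\frac1{(2k-1)^2}$), and the image of $x$ (resp. $y$) of $\Gamma_{2k-1}$ in the quotient is $(\frac1{2k-1},0)$ (resp. $(0,\frac1{2k-1})$) in $(\mathbb{Z}^t_{(2)})^2$. $\mathbb{Z}_{(p)}$ is the localization of $\mathbb{Z}$ at $p$. For $\mathcal{P}=(R_0,R_1,R_2)$, $\mathcal{P}^0G=G$ and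 $\mathcal{P}^{n+1}G=\ker\big(\mathcal{P}^nG\to(\mathcal{P}^nG/[\mathcal{P}^nG,\mathcal{P}^nG])\otimes_{\mathbb{Z}}R_n\big)$. *)

(* Defs.v *)
From HB Require Import structures.
From mathcomp Require Import all_boot all_order all_algebra.
Set Implicit Arguments. Unset Strict Implicit. Unset Printing Implicit Defensive.
Import Order.TTheory GRing.Theory Num.Theory.
Local Open Scope ring_scope.

Definition Zloc (p : nat) : pred rat := fun x => ~~ (p %| `|denq x|)%N.
Definition Zint : pred rat := fun x => denq x == 1.
Definition Zinvp (p : nat) (x : rat) : Prop := exists k : nat, `|denq x|%N = (p ^ k)%N.

(* fractional part: representative in [0,1) of a class of Q/Z *)
Definition frac (x : rat) : rat := x - (Num.floor x)%:~R.

Definition is_hom_on (T U : Type) (mulT : T -> T -> T) (H : T -> Prop)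
  (mulU : U -> U -> U) (f : T -> U) : Prop :=
  forall g h, H g -> H h -> f (mulT g h) = mulU (f g) (f h).

Definition is_Rmod (R : pred rat) (M : zmodType) (act : rat -> M -> M) : Prop :=
  [/\ forall m, act 1 m = m,
      forall x y m, R x -> R y -> act (x * y) m = act x (act y m),
      forall x y m, R x -> R y -> act (x + y) m = act x m + act y m
    & forall x m m', R x -> act x (m + m') = act x m + act x m'].

(* For a group H (carrier predicate on T, product mul), the kernel of
   H -> H/[H,H] (x)_Z R, via the universal property of H^ab (x) R:
   h maps to 0 iff every group homomorphism from H to an R-module kills h. *)
Definition tensor_ker (T : Type) (mul : T -> T -> T) (H : T -> Prop)
  (R : pred rat) : T -> Prop :=
  fun h => H h /\
    forall (M : zmodType) (act : rat -> M -> M), is_Rmod R act ->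
    forall f : T -> M, is_hom_on mul H +%R f -> f h = 0.

Fixpoint Pser (T : Type) (mul : T -> T -> T) (G : T -> Prop)
  (R : nat -> pred rat) (n : nat) : T -> Prop :=
  match n with
  | 0 => G
  | n'.+1 => tensor_ker mul (Pser mul G R n') (R n')
  end.

Definition PZZp (p : nat) (n : nat) : pred rat :=
  if (n < 2)%N then Zint else Zloc p.

(** Element (a,b,c,n) stands for (c in Z_(2)/Z) . h(a,b) . t^n, with
   a,b in Z_(2), c in [0,1) /\ Z_(2) (representative of Z_(2)/Z), n in Z.
   x of Gamma_{2k-1} is (1/(2k-1),0,0,0), y is (0,1/(2k-1),0,0), t is (0,0,0,1),
   [x,y] is (0,0,1/(2k-1)^2,0). *)
Record Gh := MkGh { ga : rat; gb : rat; gc : rat; gn : int }.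

Definition sgnz (n : int) : rat := if odd `|n|%N then -1 else 1.

Definition Ghmul (g h : Gh) : Gh :=
  MkGh (ga g + sgnz (gn g) * ga h) (gb g + sgnz (gn g) * gb h)
       (frac (gc g + gc h + ga g * (sgnz (gn g) * gb h))) (gn g + gn h).

Definition Ghinv (g : Gh) : Gh :=
  MkGh (- (sgnz (gn g) * ga g)) (- (sgnz (gn g) * gb g))
       (frac (ga g * gb g - gc g)) (- gn g).

Definition Gh1 : Gh := MkGh 0 0 0 0.

Definition Ghat (g : Gh) : Prop :=
  [/\ Zloc 2 (ga g), Zloc 2 (gb g), Zloc 2 (gc g) & 0 <= gc g < 1].

Definition Gcomm (g h : Gh) : Gh := Ghmul (Ghmul g h) (Ghmul (Ghinv g) (Ghinv h)).

Definition PG (p : nat) : nat -> Gh -> Prop := Pser Ghmul Ghat (PZZp p).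

(** * The quotient (Z^t_(2))^2 x| Z *)
Record SD := MkSD { sa : rat; sb : rat; sn : int }.
Definition SDmul (u v : SD) : SD :=
  MkSD (sa u + sgnz (sn u) * sa v) (sb u + sgnz (sn u) * sb v) (sn u + sn v).
Definition SD1 : SD := MkSD 0 0 0.
Definition SDcar (u : SD) : Prop := Zloc 2 (sa u) /\ Zloc 2 (sb u).

(** * Z[1/p]/Z, represented in [0,1) with addition mod 1 *)
Definition QZadd (x y : rat) : rat := frac (x + y).
Definition ZinvpZ (p : nat) (x : rat) : Prop := 0 <= x < 1 /\ Zinvp p x.

(* Main.v *)
Require Import Defs.
From HB Require Import structures.
From mathcomp Require Import all_boot all_order all_algebra.
Import Order.TTheory GRing.Theory Num.Theory.
Local Open Scope ring_scope.
From mathcomp Require Import ring lra zify.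
From Stdlib Require Import ClassicalEpsilon.
Require Import Defs.
Set Implicit Arguments. Unset Strict Implicit. Unset Printing Implicit Defensive.


Lemma den_dvd (n d : int) : d != 0 -> (denq (n%:~R / d%:~R) %| d)%Z.
Proof.
case: divqP => [_ /eqP //|k x _ _]; exact: dvdz_mull.
Qed.

Section Loc.
Variable q : nat.
Hypothesis hq : prime q.

Lemma ZlocP x : Zloc q x <-> exists n d : int, ~~ (q %| `|d|)%N /\ x = n%:~R / d%:~R.
Proof.
split.
  move=> h; exists (numq x), (denq x); split => //; by rewrite divq_num_den.
move=> [n [d [hd ->]]].
have d0 : d != 0 by apply: contra hd => /eqP ->; rewrite dvdn0.
apply: contra hd => h.
have := den_dvd n d0.
move=> /dvdzP [k hk].
rewrite hk abszM; exact: dvdn_mull.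
Qed.

Lemma ndvdM (a b : int) : ~~ (q %| `|a|)%N -> ~~ (q %| `|b|)%N -> ~~ (q %| `|(a * b)%R|)%N.
Proof. by move=> ha hb; rewrite abszM Euclid_dvdM // negb_or ha hb. Qed.

Lemma nz_of (d : int) : ~~ (q %| `|d|)%N -> d%:~R != 0 :> rat.
Proof. by move=> hd; rewrite intr_eq0; apply: contra hd => /eqP ->; rewrite dvdn0. Qed.

Lemma ZlocD x y : Zloc q x -> Zloc q y -> Zloc q (x + y).
Proof.
move=> /ZlocP [n1 [d1 [h1 ->]]] /ZlocP [n2 [d2 [h2 ->]]].
apply/ZlocP; exists (n1 * d2 + n2 * d1), (d1 * d2); split; first exact: ndvdM.
have := nz_of h1; have := nz_of h2 => z2 z1.
rewrite intrD !intrM; field; by rewrite z1 z2.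
Qed.

Lemma ZlocM x y : Zloc q x -> Zloc q y -> Zloc q (x * y).
Proof.
move=> /ZlocP [n1 [d1 [h1 ->]]] /ZlocP [n2 [d2 [h2 ->]]].
apply/ZlocP; exists (n1 * n2), (d1 * d2); split; first exact: ndvdM.
have := nz_of h1; have := nz_of h2 => z2 z1.
rewrite !intrM; field; by rewrite z1 z2.
Qed.

Lemma Zloc_int (n : int) : Zloc q n%:~R.
Proof.
apply/ZlocP; exists n, 1; split; last by rewrite divr1.
by rewrite /= dvdn1; apply/eqP => e; move: hq; rewrite e.
Qed.

Lemma ZlocN x : Zloc q x -> Zloc q (- x).
Proof. by move=> h; rewrite -mulN1r; apply: ZlocM => //; exact: (Zloc_int (-1)). Qed.

Lemma ZlocB x y : Zloc q x -> Zloc q y -> Zloc q (x - y).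
Proof. by move=> hx hy; apply: ZlocD => //; apply: ZlocN. Qed.

Lemma ZlocV (d : int) : ~~ (q %| `|d|)%N -> Zloc q (d%:~R)^-1.
Proof. move=> h; apply/ZlocP; exists 1, d; split => //; by rewrite div1r. Qed.

End Loc.

Lemma Zloc0 q : prime q -> Zloc q 0.
Proof. by move=> h; have := Zloc_int h 0. Qed.
Lemma Zloc1 q : prime q -> Zloc q 1.
Proof. by move=> h; have := Zloc_int h 1. Qed.


Lemma frac_ge0 x : 0 <= frac x.
Proof. by rewrite /frac subr_ge0 floor_le. Qed.
Lemma frac_lt1 x : frac x < 1.
Proof. rewrite /frac ltrBlDl; have := floorD1_gt x; by rewrite intrD addrC. Qed.
Lemma fracE x y : x - y \is a Num.int -> frac x = frac y.
Proof.
move=> h; rewrite /frac.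
have -> : x = y + (x - y) by rewrite addrC subrK.
rewrite floorDrz // intrD (floorK h); ring.
Qed.
Lemma frac_small x : 0 <= x < 1 -> frac x = x.
Proof. by move=> h; rewrite /frac (@floor_def _ x 0) ?subr0 //= add0r. Qed.
Lemma frac_id x : frac (frac x) = frac x.
Proof. by apply: frac_small; rewrite frac_ge0 frac_lt1. Qed.
Lemma frac_sub x : x - frac x \is a Num.int.
Proof. by rewrite /frac opprB addrC subrK intr_int. Qed.
Lemma fracL x y : frac (frac x + y) = frac (x + y).
Proof. apply: fracE; have -> : frac x + y - (x + y) = - (x - frac x) by ring. by rewrite rpredN frac_sub. Qed.
Lemma fracR x y : frac (y + frac x) = frac (y + x).
Proof. by rewrite addrC fracL addrC. Qed.
Lemma frac_eq0 x : frac x = 0 <-> x \is a Num.int.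
Proof.
split.
  by move=> h; have := frac_sub x; rewrite h subr0.
by move=> h; rewrite (@fracE x 0) ?subr0 // frac_small // lexx ltr01.
Qed.
Lemma frac_int (k : int) : frac k%:~R = 0.
Proof. by apply/frac_eq0; rewrite intr_int. Qed.
Lemma int_Zloc q x : prime q -> x \is a Num.int -> Zloc q x.
Proof. by move=> hq hx; rewrite -(floorK hx); apply: Zloc_int. Qed.
Lemma Zloc_frac q x : prime q -> Zloc q (frac x) <-> Zloc q x.
Proof.
move=> hq; split => h.
  have -> : x = (x - frac x) + frac x by rewrite subrK.
  by apply: ZlocD => //; apply: int_Zloc => //; exact: frac_sub.
have -> : frac x = x - (x - frac x) by rewrite opprB addrC subrK.
by apply: ZlocB => //; apply: int_Zloc => //; exact: frac_sub.
Qed.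
Lemma int_fracB z : frac z - z \is a Num.int.
Proof. by rewrite -opprB rpredN frac_sub. Qed.


Lemma prime2 : prime 2. Proof. by []. Qed.

Definition Ev (x : rat) : bool := Zloc 2 (x / 2).

Lemma Ev_rep (n d : int) : ~~ (2 %| `|d|)%N -> Ev (n%:~R / d%:~R) <-> (2 %| `|n|)%N.
Proof.
move=> hd; have zd := nz_of hd; split.
  move=> /ZlocP [n' [d' [hd' e]]].
  have zd' := nz_of hd'.
  have : (n * d')%:~R = (2 * n' * d)%:~R :> rat.
    rewrite !intrM.
    set A := (n%:~R : rat) in e *; set B := (d%:~R : rat) in zd e *;
    set C := (n'%:~R : rat) in e *; set D := (d'%:~R : rat) in zd' e *.
    have -> : A = (A / B / 2) * 2 * B by field; rewrite zd.
    rewrite e; have -> : (2%:~R : rat) = 2 by []. field; by rewrite zd'.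
  move/eqP; rewrite eqr_int => /eqP e2; clear e; nia.
move=> /dvdnP [k hk]; apply/ZlocP.
have [m hm] : exists m : int, n = m * 2.
  exists (if 0 <= n then k%:Z else - k%:Z); case: (lerP 0 n) => h; lia.
exists m, d; split => //; rewrite hm intrM; have -> : (2%:~R : rat) = 2 by [].
field; by rewrite zd.
Qed.

Lemma EvD x y : Ev x -> Ev y -> Ev (x + y).
Proof. by move=> hx hy; rewrite /Ev mulrDl; apply: ZlocD. Qed.
Lemma EvN x : Ev x -> Ev (- x).
Proof. by move=> hx; rewrite /Ev mulNr; apply: ZlocN. Qed.
Lemma EvB x y : Ev x -> Ev y -> Ev (x - y).
Proof. by move=> hx hy; apply: EvD => //; apply: EvN. Qed.
Lemma Ev_Zloc x : Ev x -> Zloc 2 x.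
Proof.
move=> h; have -> : x = (x / 2) * 2 by field.
by apply: ZlocM => //; apply: (Zloc_int prime2 2).
Qed.
Lemma Ev_or x : Zloc 2 x -> Ev x \/ Ev (x + 1).
Proof.
move=> /ZlocP [n [d [hd ->]]].
have zd := nz_of hd.
have [h|h] : (2 %| `|n|)%N \/ (2 %| `|(n + d)%R|)%N by lia.
  by left; apply/Ev_rep.
right; have -> : n%:~R / d%:~R + 1 = (n + d)%:~R / d%:~R :> rat.
  by rewrite intrD; field; rewrite zd.
by apply/Ev_rep.
Qed.
Lemma Ev2 : Ev 2. Proof. by rewrite /Ev divff //; apply: Zloc1. Qed.
Lemma Ev0 : Ev 0. Proof. by rewrite /Ev mul0r; apply: Zloc0. Qed.
Lemma nEv1 : ~~ Ev 1.
Proof.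
apply/negP => h.
have : Ev (1%:~R / 1%:~R) by rewrite divr1.
by move/(Ev_rep 1 (isT : ~~ (2 %| `|1%:Z|)%N)).
Qed.

Definition par (x : rat) : 'Z_2 := if Ev x then 0%R else 1%R.

Lemma parD x y : Zloc 2 x -> Zloc 2 y -> par (x + y) = par x + par y.
Proof.
move=> hx hy; rewrite /par.
case ex: (Ev x); case ey: (Ev y).
- by rewrite EvD // addr0.
- case exy: (Ev (x + y)); last by rewrite add0r.
  have : Ev ((x + y) - x) by apply: EvB.
  by rewrite addrC addKr ey.
- case exy: (Ev (x + y)); last by rewrite addr0.
  have : Ev ((x + y) - y) by apply: EvB.
  by rewrite addrK ex.
- have [h|h1] := Ev_or hx; first by rewrite h in ex.
  have [h|h2] := Ev_or hy; first by rewrite h in ey.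
  have -> : Ev (x + y).
    have -> : x + y = (x + 1) + (y + 1) - 2 by ring.
    by apply: EvB; [apply: EvD|apply: Ev2].
  by apply: val_inj.
Qed.

Lemma sgnzE (n : int) : sgnz n = 1 \/ sgnz n = -1.
Proof. rewrite /sgnz; case: ifP; auto. Qed.

Lemma parS n x : par (sgnz n * x) = par x.
Proof.
case: (sgnzE n) => ->; rewrite ?mul1r // mulN1r /par.
case ex: (Ev x); first by rewrite EvN.
case ey: (Ev (- x)) => //.
by have := EvN ey; rewrite opprK ex.
Qed.


Lemma sgnzD (m n : int) : sgnz (m + n) = sgnz m * sgnz n.
Proof.
rewrite /sgnz.
have -> : odd `|(m + n)%R|%N = odd `|m|%N (+) odd `|n|%N by lia.
by case: (odd `|m|%N); case: (odd `|n|%N); rewrite /= ?mulr1 ?mulN1r ?opprK.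
Qed.
Lemma sgnzN (n : int) : sgnz (- n) = sgnz n.
Proof. by rewrite /sgnz abszN. Qed.
Lemma sgnz0 : sgnz 0 = 1. Proof. by []. Qed.
Lemma sgnz_sq (n : int) : sgnz n * sgnz n = 1.
Proof. by case: (sgnzE n) => ->; rewrite ?mulr1 // mulN1r opprK. Qed.

Lemma Ghat_mul g h : Ghat g -> Ghat h -> Ghat (Ghmul g h).
Proof.
case: g => a b c n; case: h => a' b' c' n' [/= ha hb hc _] [/= ha' hb' hc' _].
have hs : Zloc 2 (sgnz n) by case: (sgnzE n) => ->; [apply: Zloc1|apply: ZlocN; [|apply: Zloc1]].
split => /=.
- by apply: ZlocD => //; apply: ZlocM.
- by apply: ZlocD => //; apply: ZlocM.
- apply/Zloc_frac => //; apply: ZlocD => //; first exact: ZlocD.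
  by apply: ZlocM => //; apply: ZlocM.
- by rewrite frac_ge0 frac_lt1.
Qed.

Lemma Zloc_sgnz q n x : prime q -> Zloc q x -> Zloc q (sgnz n * x).
Proof. by move=> hq hx; case: (sgnzE n) => ->; rewrite ?mul1r // mulN1r; apply: ZlocN. Qed.

Lemma Ghat_inv g : Ghat g -> Ghat (Ghinv g).
Proof.
case: g => a b c n [/= ha hb hc _]; split => /=.
- by apply: ZlocN => //; apply: Zloc_sgnz.
- by apply: ZlocN => //; apply: Zloc_sgnz.
- by apply/Zloc_frac => //; apply: ZlocB => //; apply: ZlocM.
- by rewrite frac_ge0 frac_lt1.
Qed.

Lemma Ghat1 : Ghat Gh1.
Proof. by split; rewrite /= ?lexx ?ltr01 //; apply: Zloc0. Qed.

Lemma frac0 : frac 0 = 0. Proof. exact: (frac_int 0). Qed.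

Lemma Gh_mulV g : Ghmul g (Ghinv g) = Gh1.
Proof.
case: g => a b c n; rewrite /Ghmul /Ghinv /Gh1 /=; congr MkGh.
- by rewrite mulrN mulrA sgnz_sq mul1r subrr.
- by rewrite mulrN mulrA sgnz_sq mul1r subrr.
- apply/frac_eq0.
  have -> : c + frac (a * b - c) + a * (sgnz n * - (sgnz n * b)) = (frac (a * b - c) - (a * b - c)) + (1 - sgnz n * sgnz n) * (a * b) by ring.
  by rewrite sgnz_sq subrr mul0r addr0 int_fracB.
- by rewrite subrr.
Qed.

Lemma Gh_Vmul g : Ghmul (Ghinv g) g = Gh1.
Proof.
case: g => a b c n; rewrite /Ghmul /Ghinv /Gh1 /= sgnzN; congr MkGh.
- by rewrite addrC subrr.
- by rewrite addrC subrr.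
- apply/frac_eq0.
  have -> : frac (a * b - c) + c + - (sgnz n * a) * (sgnz n * b) = (frac (a * b - c) - (a * b - c)) + (1 - sgnz n * sgnz n) * (a * b) by ring.
  by rewrite sgnz_sq subrr mul0r addr0 int_fracB.
- by rewrite addrC subrr.
Qed.

Lemma Gh_mul1 g : Ghat g -> Ghmul Gh1 g = g.
Proof.
case: g => a b c n [_ _ _ hc]; rewrite /Ghmul /Gh1 /= sgnz0 !mul1r !add0r mul0r addr0.
by rewrite frac_small.
Qed.

Lemma Gh11 : Ghmul Gh1 Gh1 = Gh1.
Proof. by rewrite Gh_mul1 //; apply: Ghat1. Qed.

Lemma dbl0 (M : zmodType) (x : M) : x = x + x -> x = 0.
Proof. by move=> e; apply: (addIr x); rewrite add0r -e. Qed.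

Section Hom.
Variable (M : zmodType) (H : Gh -> Prop) (f : Gh -> M).
Hypothesis hf : is_hom_on Ghmul H +%R f.

Lemma hom1 : H Gh1 -> f Gh1 = 0.
Proof.
move=> h1; have := hf h1 h1; rewrite Gh11; exact: dbl0.
Qed.
End Hom.

Definition actZ (M : zmodType) (x : rat) (m : M) : M := m *~ numq x.

Lemma Zint_int x : Zint x -> x = (numq x)%:~R.
Proof. by move=> h; rewrite numqK //; rewrite Qint_def. Qed.

Lemma is_Rmod_actZ (M : zmodType) : is_Rmod Zint (@actZ M).
Proof.
split.
- by move=> m; rewrite /actZ /=.
- move=> x y m hx hy; rewrite /actZ (Zint_int hx) (Zint_int hy) -intrM !numq_int.
  by rewrite mulrC mulrzA.
- move=> x y m hx hy; rewrite /actZ (Zint_int hx) (Zint_int hy) -intrD !numq_int.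
  by rewrite mulrzDr.
- by move=> x m m' _; rewrite /actZ mulrzDl.
Qed.

Section RmodFacts.
Variable (R : pred rat) (M : zmodType) (act : rat -> M -> M).
Hypothesis ha : is_Rmod R act.
Hypothesis Rnat : forall n : nat, R n%:R.

Lemma act0 x : R x -> act x 0 = 0.
Proof.
move=> hx; case: ha => _ _ _ h4; have := h4 x 0 0 hx; rewrite addr0; exact: dbl0.
Qed.

Lemma act_nat (n : nat) m : act n%:R m = m *+ n.
Proof.
case: ha => h1 _ h3 _; elim: n => [|n IH].
  have := h3 0 0 m (Rnat 0) (Rnat 0); rewrite addr0; exact: dbl0.
by rewrite -addn1 natrD h3 ?Rnat // IH h1 addn1 mulrSr.
Qed.
End RmodFacts.


Lemma Ghat_mk a b c n : Zloc 2 a -> Zloc 2 b -> Zloc 2 c -> 0 <= c < 1 -> Ghat (MkGh a b c n).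
Proof. by move=> *; split. Qed.
Lemma Ghat_mk0 a b n : Zloc 2 a -> Zloc 2 b -> Ghat (MkGh a b 0 n).
Proof. by move=> ha hb; apply: Ghat_mk => //; rewrite ?lexx ?ltr01 //; apply: Zloc0. Qed.
Lemma Zl0 : Zloc 2 0. Proof. exact: Zloc0. Qed.
Lemma Zl1 : Zloc 2 1. Proof. exact: Zloc1. Qed.

Ltac gsimp := rewrite /Ghmul /Ghinv /sgnz /= ?(mul0r, mulr0, addr0, add0r, mul1r, mulr1, frac0).

Section Kill.
Variable (M : zmodType) (H : Gh -> Prop) (f : Gh -> M).
Hypothesis hf : is_hom_on Ghmul H +%R f.
Hypothesis H1 : H Gh1.

Lemma killX (al : rat) :
  H (MkGh (- al) 0 0 0) -> H (MkGh al 0 0 0) -> H (MkGh 0 0 0 1) ->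
  f (MkGh (al + al) 0 0 0) = 0.
Proof.
move=> hu hv ht.
have e1 : Ghmul (MkGh 0 0 0 1) (MkGh (- al) 0 0 0) = Ghmul (MkGh al 0 0 0) (MkGh 0 0 0 1).
  by gsimp; congr MkGh; rewrite ?mulN1r ?opprK.
have e2 : Ghmul (MkGh (- al) 0 0 0) (MkGh al 0 0 0) = Gh1.
  by gsimp; rewrite addNr.
have e3 : Ghmul (MkGh al 0 0 0) (MkGh al 0 0 0) = MkGh (al + al) 0 0 0.
  by gsimp.
have := hf ht hu; rewrite e1 (hf hv ht) [f _ + f (MkGh 0 0 0 1)]addrC => /addrI fuv.
have := hf hu hv; rewrite e2 (hom1 hf H1) -fuv => h0.
by rewrite -e3 (hf hv hv) h0.
Qed.

Lemma killY (be : rat) :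
  H (MkGh 0 (- be) 0 0) -> H (MkGh 0 be 0 0) -> H (MkGh 0 0 0 1) ->
  f (MkGh 0 (be + be) 0 0) = 0.
Proof.
move=> hu hv ht.
have e1 : Ghmul (MkGh 0 0 0 1) (MkGh 0 (- be) 0 0) = Ghmul (MkGh 0 be 0 0) (MkGh 0 0 0 1).
  by gsimp; congr MkGh; rewrite ?mulN1r ?opprK.
have e2 : Ghmul (MkGh 0 (- be) 0 0) (MkGh 0 be 0 0) = Gh1.
  by gsimp; rewrite addNr.
have e3 : Ghmul (MkGh 0 be 0 0) (MkGh 0 be 0 0) = MkGh 0 (be + be) 0 0.
  by gsimp.
have := hf ht hu; rewrite e1 (hf hv ht) [f _ + f (MkGh 0 0 0 1)]addrC => /addrI fuv.
have := hf hu hv; rewrite e2 (hom1 hf H1) -fuv => h0.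
by rewrite -e3 (hf hv hv) h0.
Qed.

(* central element killed via a commutator [ (al,0,0,0), (0,be,0,0) ] *)
Lemma killC (al be : rat) :
  let x := MkGh al 0 0 0 in let y := MkGh 0 be 0 0 in
  let C := MkGh 0 0 (frac (al * be)) 0 in
  H x -> H y -> H C -> H (Ghmul y x) -> f C = 0.
Proof.
move=> x y C hx hy hC hyx.
have e : Ghmul x y = Ghmul C (Ghmul y x).
  rewrite /x /y /C; gsimp; congr MkGh; by rewrite frac_id.
have := hf hx hy; rewrite e (hf hC hyx) (hf hy hx) => h.
by apply: (addIr (f y + f x)); rewrite add0r h addrC.
Qed.
End Kill.



Ltac zl := repeat (first [done | apply: Zloc0 | apply: Zloc1 | apply: ZlocN | apply: Ghat_mk0]).

Lemma Ev_half x : Ev x -> Zloc 2 (x / 2). Proof. by []. Qed.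

Lemma kill1 (M : zmodType) (f : Gh -> M) : is_hom_on Ghmul Ghat +%R f ->
  forall g, Ghat g -> Ev (ga g) -> Ev (gb g) -> gn g = 0 -> f g = 0.
Proof.
move=> hf [a b c n] /= [/= ha hb hc hc01] ea eb ->.
set X := MkGh a 0 0 0; set Y := MkGh 0 b 0 0; set c' := frac (c - a * b).
set C := MkGh 0 0 c' 0.
have hc' : Zloc 2 c' by apply/Zloc_frac => //; apply: ZlocB => //; apply: ZlocM.
have hc'01 : 0 <= c' < 1 by rewrite frac_ge0 frac_lt1.
have hX : Ghat X by apply: Ghat_mk0.
have hY : Ghat Y by apply: Ghat_mk0.
have hC : Ghat C by apply: Ghat_mk.
have e : MkGh a b c 0 = Ghmul (Ghmul X Y) C.
  rewrite /X /Y /C /c'; gsimp; congr MkGh.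
  rewrite -{1}(frac_small hc01); apply: fracE.
  have -> : c - (frac (a * b) + frac (c - a * b)) =
     - ((frac (a * b) - a * b) + (frac (c - a * b) - (c - a * b))) by ring.
  by rewrite rpredN rpredD // int_fracB.
have H1 := Ghat1.
have fX : f X = 0.
  have -> : X = MkGh (a / 2 + a / 2) 0 0 0 by rewrite /X; congr MkGh; field.
  by apply: (killX hf H1); zl.
have fY : f Y = 0.
  have -> : Y = MkGh 0 (b / 2 + b / 2) 0 0 by rewrite /Y; congr MkGh; field.
  by apply: (killY hf H1); zl.
have fC : f C = 0.
  have eC : C = MkGh 0 0 (frac (1 * c')) 0 by rewrite mul1r /c' frac_id.
  have := @killC M Ghat f hf 1 c'; rewrite -eC; apply.
  - by apply: Ghat_mk0 => //; apply: Zloc1.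
  - by apply: Ghat_mk0 => //; apply: Zloc0.
  - by [].
  - by apply: Ghat_mul; apply: Ghat_mk0 => //; (apply: Zloc0 || apply: Zloc1).
by rewrite e (hf _ _ (Ghat_mul hX hY) hC) (hf _ _ hX hY) fX fY fC !addr0.
Qed.

Definition f1 (g : Gh) : ('Z_2 * 'Z_2 * int)%type := (par (ga g), par (gb g), gn g).

Lemma f1_hom : is_hom_on Ghmul Ghat +%R f1.
Proof.
move=> [a b c n] [a' b' c' n'] [/= ha hb _ _] [/= ha' hb' _ _].
rewrite /f1 /= !parD ?parS //; exact: Zloc_sgnz.
Qed.

Lemma par0 x : par x = 0 <-> Ev x.
Proof. by rewrite /par; case: (Ev x). Qed.

Lemma PG1E p g : PG p 1 g <-> [/\ Ghat g, Ev (ga g), Ev (gb g) & gn g = 0].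
Proof.
split.
  move=> [hg hk].
  have := hk _ _ (is_Rmod_actZ _) _ f1_hom.
  rewrite /f1 => e.
  have [e1 e2 e3] : [/\ par (ga g) = 0, par (gb g) = 0 & gn g = 0].
    by split; [move: (congr1 (fun z => z.1.1) e)|move: (congr1 (fun z => z.1.2) e)|move: (congr1 (fun z => z.2) e)].
  by split => //; apply/par0.
move=> [hg ea eb en]; split => // M act _ f hf; exact: kill1.
Qed.

Lemma Z2_cases (u : 'Z_2) : u = 0 \/ u = 1.
Proof. by case: u => [[|[|k]] hk]; [left|right|]; try apply: val_inj. Qed.

Lemma par1 : par 1 = 1.
Proof. by rewrite /par (negbTE nEv1). Qed.
Lemma par00 : par 0 = 0.
Proof. by rewrite /par Ev0. Qed.

Lemma part1 p : (forall g, PG p 1 g <->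
      [/\ Ghat g, Zloc 2 (ga g / 2), Zloc 2 (gb g / 2) & gn g = 0]) /\
   (exists f : Gh -> ('Z_2 * 'Z_2 * int)%type,
      [/\ is_hom_on Ghmul Ghat +%R f,
          (forall y, exists g, Ghat g /\ f g = y)
        & (forall g, Ghat g -> (f g = 0 <-> PG p 1 g))]).
Proof.
split; first exact: PG1E.
exists f1; split; first exact: f1_hom.
  move=> [[u v] n].
  have hz : forall w : 'Z_2, exists r, Zloc 2 r /\ par r = w.
    move=> w; case: (Z2_cases w) => ->; [exists 0|exists 1]; split;
      rewrite ?par00 ?par1 //; zl.
  have [r1 [h1 e1]] := hz u; have [r2 [h2 e2]] := hz v.
  exists (MkGh r1 r2 0 n); split; first exact: Ghat_mk0.
  by rewrite /f1 /= e1 e2.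
move=> g hg; rewrite PG1E; split.
  move=> e.
  have [e1 e2 e3] : [/\ par (ga g) = 0, par (gb g) = 0 & gn g = 0].
    by split; [move: (congr1 (fun z => z.1.1) e)|move: (congr1 (fun z => z.1.2) e)|move: (congr1 (fun z => z.2) e)].
  by split => //; apply/par0.
move=> [_ /par0 ea /par0 eb en]; by rewrite /f1 ea eb en.
Qed.



Lemma Zl2 : Zloc 2 2.
Proof. have := Zloc_int prime2 2; by rewrite -pmulrn. Qed.

Lemma PG1_mul p g h : PG p 1 g -> PG p 1 h -> PG p 1 (Ghmul g h).
Proof.
rewrite !PG1E => -[hg ea eb en] [hh ea' eb' en']; split.
- exact: Ghat_mul.
- by rewrite /= en sgnz0 mul1r; apply: EvD.
- by rewrite /= en sgnz0 mul1r; apply: EvD.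
- by rewrite /= en en'.
Qed.

Definition fa (g : Gh) : rat := ga g.
Definition fb (g : Gh) : rat := gb g.

Lemma fa_hom p : is_hom_on Ghmul (PG p 1) +%R fa.
Proof. move=> g h /PG1E [_ _ _ en] _; by rewrite /fa /= en sgnz0 mul1r. Qed.
Lemma fb_hom p : is_hom_on Ghmul (PG p 1) +%R fb.
Proof. move=> g h /PG1E [_ _ _ en] _; by rewrite /fb /= en sgnz0 mul1r. Qed.

Lemma two_rep c : Zloc 2 c -> exists be, Ev be /\ frac (2 * be) = frac c.
Proof.
move=> /ZlocP [u [d [hd ec]]].
have zd := nz_of hd.
have [e he] : exists e : int, d = 2 * e + 1 by exists (d %/ 2)%Z; lia.
exists ((c - u%:~R * d%:~R) / 2); split.
  apply/ZlocP; exists (- u * e * (e + 1)), d; split => //.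
  rewrite ec; move: zd; rewrite he !intrD !intrM !intrN => zd.
  have -> : (2%:~R : rat) = 2 by [].
  field; by rewrite zd.
apply: fracE.
have -> : 2 * ((c - u%:~R * d%:~R) / 2) - c = - (u * d)%:~R by rewrite intrM; field.
by rewrite rpredN intr_int.
Qed.

Lemma PG2E p g : PG p 2 g <-> [/\ Ghat g, ga g = 0, gb g = 0 & gn g = 0].
Proof.
split.
  move=> [hg hk].
  have := hk _ _ (is_Rmod_actZ _) _ (@fa_hom p); rewrite /fa => ea.
  have := hk _ _ (is_Rmod_actZ _) _ (@fb_hom p); rewrite /fb => eb.
  by move: hg => /PG1E [? _ _ en].
case: g => a b c n [hg /= -> -> ->]; case: hg => _ _ hc hc01.
have hg1 : PG p 1 (MkGh 0 0 c 0) by apply/PG1E; split => //; rewrite /= ?Ev0 //; apply: Ghat_mk; zl.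
split => // M act _ f hf.
have [be [ebe efr]] := two_rep hc.
rewrite (frac_small hc01) in efr.
have eC : MkGh 0 0 c 0 = MkGh 0 0 (frac (2 * be)) 0 by rewrite efr.
have P1 : forall a' b', Ev a' -> Ev b' -> PG p 1 (MkGh a' b' 0 0).
  move=> a' b' ea eb; apply/PG1E; split => //; apply: Ghat_mk0; exact: Ev_Zloc.
rewrite eC; apply: (@killC M (PG p 1) f hf 2 be); rewrite -?eC //.
- by apply: P1; [apply: Ev2|apply: Ev0].
- by apply: P1; [apply: Ev0|].
- by gsimp; apply: P1; [apply: Ev2|].
Qed.

Definition f2 (g : Gh) : SD := MkSD (ga g) (gb g) (gn g).

Lemma f2_props p :
   [/\ is_hom_on Ghmul Ghat SDmul f2,
       (forall g, Ghat g -> SDcar (f2 g)),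
       (forall u, SDcar u -> exists g, Ghat g /\ f2 g = u)
     & (forall g, Ghat g -> (f2 g = SD1 <-> PG p 2 g))].
Proof.
split.
- by move=> g h _ _.
- by move=> g [].
- move=> [a b n] [/= ha hb]; exists (MkGh a b 0 n); split => //; exact: Ghat_mk0.
- move=> [a b c n] hg; rewrite PG2E /f2 /SD1 /=; split.
    by move=> e; case: e hg => -> -> -> hg.
  by case=> _ -> -> ->.
Qed.

Lemma part2 p :
  (forall g, PG p 2 g <-> [/\ Ghat g, ga g = 0, gb g = 0 & gn g = 0]) /\
   (exists f : Gh -> SD,
      [/\ is_hom_on Ghmul Ghat SDmul f,
          (forall g, Ghat g -> SDcar (f g)),
          (forall u, SDcar u -> exists g, Ghat g /\ f g = u)
        & (forall g, Ghat g -> (f g = SD1 <-> PG p 2 g))]).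
Proof. split; [exact: PG2E | exists f2; exact: f2_props]. Qed.

Section QH.
Local Open Scope quotient_scope.


Section QMod.
Variable q : nat.
Hypothesis hq : prime q.

Definition ZlP : {pred rat} := fun x => Zloc q x.

Lemma ZlP_closed : zmod_closed ZlP.
Proof. split; first exact: Zloc0. by move=> x y hx hy; apply: ZlocB. Qed.

HB.instance Definition _ := GRing.isZmodClosed.Build rat ZlP ZlP_closed.

Definition QM := Quotient.quot ZlP.
Check (\pi_QM : rat -> QM).
Definition Qact (x : rat) (m : QM) : QM := \pi_QM (x * repr m).

Lemma piE0 x y : (\pi_QM x = \pi_QM y) <-> Zloc q (x - y).
Proof.
split; first by move/eqP; rewrite -Quotient.idealrBE.
by move=> h; apply/eqP; rewrite -Quotient.idealrBE.
Qed.

Lemma piD x y : \pi_QM (x + y) = \pi_QM x + \pi_QM y.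
Proof. by rewrite pi_addr. Qed.

Lemma repr_pi x : Zloc q (repr (\pi_QM x) - x).
Proof. by apply/piE0; rewrite reprK. Qed.

Lemma Qact_mod : is_Rmod (Zloc q) Qact.
Proof.
split.
- by move=> m; rewrite /Qact mul1r reprK.
- move=> x y m hx hy; rewrite /Qact; apply/piE0.
  have -> : x * y * repr m - x * repr (\pi_QM (y * repr m)) =
     - (x * (repr (\pi_QM (y * repr m)) - y * repr m)) by ring.
  by apply: ZlocN => //; apply: ZlocM => //; apply: repr_pi.
- by move=> x y m hx hy; rewrite /Qact mulrDl piD.
- move=> x m m' hx; rewrite /Qact -piD; apply/piE0.
  have -> : x * repr (m + m') - (x * repr m + x * repr m') =
     x * (repr (m + m') - (repr m + repr m')) by ring.
  apply: ZlocM => //; apply/piE0.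
  by rewrite piD !reprK.
Qed.
End QMod.

End QH.

Section QI.
Local Open Scope quotient_scope.



Lemma Zloc_nat q n : prime q -> Zloc q n%:R.
Proof. by move=> hq; have := Zloc_int hq n; rewrite -pmulrn. Qed.

Section P3.
Variable p : nat.
Hypothesis hp : prime p.

Definition fq (g : Gh) : QM hp := \pi_(QM hp) (gc g).

Lemma fq_hom : is_hom_on Ghmul (PG p 2) +%R fq.
Proof.
move=> g h /PG2E [_ ea _ _] /PG2E [_ _ _ _]; rewrite /fq /= ea mul0r addr0 -piD.
apply/piE0; apply: int_Zloc => //; exact: int_fracB.
Qed.

Lemma PG2_mk c : Zloc 2 c -> 0 <= c < 1 -> PG p 2 (MkGh 0 0 c 0).
Proof. by move=> hc hc01; apply/PG2E; split => //; apply: Ghat_mk => //; zl. Qed.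

Lemma PG3E g : PG p 3 g <-> PG p 2 g /\ Zloc p (gc g).
Proof.
split.
  move=> [h2 hk]; split => //.
  have := hk _ _ (Qact_mod hp) _ fq_hom; rewrite /fq => e.
  have : \pi_(QM hp) (gc g) = \pi_(QM hp) 0 by rewrite e pi_zeror.
  by move/piE0; rewrite subr0.
move=> [h2 hc]; split => // M act ha f hf.
move: h2 hc; case: g => a b c n h2; have := h2; move=> /PG2E [[_ _ hc2 hc01] /= ea eb en].
rewrite ea eb en in h2 * => hc.
set g := MkGh 0 0 c 0.
set z := fun k : nat => MkGh 0 0 (frac (k%:R * c)) 0.
have hz : forall k, PG p 2 (z k).
  move=> k; apply: PG2_mk; last by rewrite frac_ge0 frac_lt1.
  by apply/Zloc_frac => //; apply: ZlocM => //; apply: Zloc_nat.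
have H1 : PG p 2 Gh1 by apply: PG2_mk; rewrite ?lexx ?ltr01 //; zl.
have fz : forall k, f (z k) = f g *+ k.
  elim=> [|k IH].
    by rewrite /z mul0r frac0 -/Gh1 (hom1 hf H1).
  have -> : z k.+1 = Ghmul (z k) g.
    rewrite /z /g; gsimp; congr MkGh; by rewrite fracL -addn1 natrD mulrDl mul1r.
  by rewrite (hf _ _ (hz k) h2) IH mulrSr.
set D := `|denq c|%N.
have hD : ~~ (p %| D)%N by [].
have eD : (D%:R : rat) = (denq c)%:~R by rewrite /D pmulrn absz_denq.
have zD : (D%:R : rat) != 0 by rewrite eD intr_eq0 denq_neq0.
have : z D = Gh1.
  rewrite /z /Gh1; congr MkGh; apply/frac_eq0; rewrite eD mulrC -numqE; exact: intr_int.
move/(congr1 f); rewrite fz (hom1 hf H1) => e0.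
have Rnat : forall k : nat, Zloc p k%:R by move=> k; apply: Zloc_nat.
have hV : Zloc p (D%:R)^-1.
  have := ZlocV (d := D%:Z) hD; by rewrite -pmulrn.
have ha' : is_Rmod (Zloc p) act := ha.
case: (ha') => h1 hm _ _.
rewrite -[f g]h1 -(mulVf zD) hm // ?Rnat // (act_nat ha' Rnat) e0.
exact: (act0 ha').
Qed.
End P3.

End QI.


Section Pinv.
Variable p : nat.
Hypothesis hp : prime p.

Lemma p_gt0 k : (0 < p ^ k)%N.
Proof. by rewrite expn_gt0 prime_gt0. Qed.

Lemma pk_nz k : ((p ^ k)%:R : rat) != 0.
Proof. by rewrite pnatr_eq0 -lt0n p_gt0. Qed.

Lemma ZinvpP x : Zinvp p x <-> exists (n : int) (k : nat), x = n%:~R / (p ^ k)%:R.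
Proof.
split.
  move=> [k hk]; exists (numq x), k.
  rewrite -hk pmulrn absz_denq; by rewrite divq_num_den.
move=> [n [k ->]].
have hd : ((p ^ k)%:Z != 0) by rewrite -lt0n p_gt0.
have := den_dvd n hd; rewrite -pmulrn => hdv.
move: hdv => /(dvdn_pfactor _ _ hp) [m _ e]; exists m; exact: e.
Qed.

Lemma ZinvpD x y : Zinvp p x -> Zinvp p y -> Zinvp p (x + y).
Proof.
move=> /ZinvpP [n1 [k1 ->]] /ZinvpP [n2 [k2 ->]]; apply/ZinvpP.
exists (n1 * (p ^ k2)%:Z + n2 * (p ^ k1)%:Z), (k1 + k2).
have z1 := pk_nz k1; have z2 := pk_nz k2.
rewrite expnD natrM intrD !intrM -!pmulrn; field; by rewrite z1 z2.
Qed.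

Lemma ZinvpN x : Zinvp p x -> Zinvp p (- x).
Proof. by move=> [k hk]; exists k; rewrite denqN. Qed.

Lemma Zinvp_int x : x \is a Num.int -> Zinvp p x.
Proof. by move=> h; exists 0%N; move: h; rewrite Qint_def => /eqP ->. Qed.

Lemma Zinvp_frac x : Zinvp p x -> Zinvp p (frac x).
Proof.
move=> h; have -> : frac x = x + (frac x - x) by rewrite addrC subrK.
by apply: ZinvpD => //; apply: Zinvp_int; exact: int_fracB.
Qed.

Lemma Zinvp_Zloc_int x : Zinvp p x -> Zloc p x -> x \is a Num.int.
Proof.
move=> [k hk] hl; rewrite Qint_def.
move: hl; rewrite /Zloc hk; case: k hk => [|k] hk.
  by move=> _; rewrite -absz_denq hk.
by rewrite expnS dvdn_mulr.
Qed.

Definition Spec (c y : rat) := [/\ 0 <= y < 1, Zinvp p y & Zloc p (c - y)].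

Lemma Spec_uniq c y y' : Spec c y -> Spec c y' -> y = y'.
Proof.
move=> [hy iy ly] [hy' iy' ly'].
have hi : y - y' \is a Num.int.
  apply: Zinvp_Zloc_int; first by apply: ZinvpD => //; apply: ZinvpN.
  have -> : y - y' = (c - y') - (c - y) by ring.
  exact: ZlocB.
have ek := floorK hi; set k := Num.floor (y - y') in ek.
have h1 : (-1 : int) < k.
  rewrite -(ltr_int rat) ek intrN; move: hy hy' => /andP[? ?] /andP[? ?]; lra.
have h2 : k < 1.
  rewrite -(ltr_int rat) ek; move: hy hy' => /andP[? ?] /andP[? ?]; lra.
have k0 : k = 0 by lia.
by apply/eqP; rewrite -subr_eq0 -ek k0.
Qed.

Lemma Spec_ex c : exists y, Spec c y.
Proof.
set D := `|denq c|%N.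
have D0 : (0 < D)%N by rewrite /D absz_gt0 denq_neq0.
have [m hcop hD] := pfactor_coprime hp D0.
set k := logn p D in hD.
have hcop' : coprime m (p ^ k) by apply: coprimeXr; rewrite coprime_sym.
have [u [v huv]] := Bezoutz m%:Z (p ^ k)%:Z.
have hb : (u%:~R * m%:R + v%:~R * (p ^ k)%:R : rat) = 1.
  have : (u * m%:Z + v * (p ^ k)%:Z) = 1.
    by rewrite huv /gcdz /= (eqP hcop').
  move/(congr1 (fun z : int => (z%:~R : rat))); rewrite intrD !intrM -!pmulrn; by [].
have zm : (m%:R : rat) != 0.
  by rewrite pnatr_eq0; apply/eqP => m0; move: hD D0; rewrite m0 mul0n => ->.
have zk := pk_nz k.
have ec : c = (numq c)%:~R / (m%:R * (p ^ k)%:R).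
  by rewrite -natrM -hD /D pmulrn absz_denq divq_num_den.
set y := frac ((numq c)%:~R * u%:~R / (p ^ k)%:R).
exists y; split.
- by rewrite frac_ge0 frac_lt1.
- apply: Zinvp_frac; apply/ZinvpP; exists (numq c * u), k; by rewrite intrM.
- have E : c - (numq c)%:~R * u%:~R / (p ^ k)%:R - (numq c)%:~R * v%:~R / m%:R
     = (numq c)%:~R * (1 - (u%:~R * m%:R + v%:~R * (p ^ k)%:R)) / (m%:R * (p ^ k)%:R).
    rewrite {1}ec; field; by rewrite zm zk.
  rewrite hb subrr mulr0 mul0r in E.
  move/eqP: E; rewrite subr_eq0 => /eqP E.
  have -> : c - y = (c - (numq c)%:~R * u%:~R / (p ^ k)%:R) +
      - (y - (numq c)%:~R * u%:~R / (p ^ k)%:R) by ring.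
  apply: ZlocD => //.
    rewrite E; apply/ZlocP; exists (numq c * v), m; split; last by rewrite intrM pmulrn.
    by rewrite /= -prime_coprime.
  by apply: ZlocN => //; apply: int_Zloc => //; exact: int_fracB.
Qed.

End Pinv.


Lemma fracL3 x y z : frac (frac x + y + z) = frac (x + y + z).
Proof. apply: fracE; have -> : frac x + y + z - (x + y + z) = frac x - x by ring. exact: int_fracB. Qed.
Lemma fracM3 x y z : frac (x + frac y + z) = frac (x + y + z).
Proof. apply: fracE; have -> : x + frac y + z - (x + y + z) = frac y - y by ring. exact: int_fracB. Qed.

Lemma Gh_assoc g h k : Ghmul (Ghmul g h) k = Ghmul g (Ghmul h k).
Proof.
case: g => a1 b1 c1 n1; case: h => a2 b2 c2 n2; case: k => a3 b3 c3 n3.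
rewrite /Ghmul /= fracL3 fracM3 !sgnzD; congr MkGh.
- by ring.
- by ring.
- congr frac; case: (sgnzE n1) => ->; ring.
- by ring.
Qed.

Lemma central_comm h c : Ghmul (MkGh 0 0 c 0) h = Ghmul h (MkGh 0 0 c 0).
Proof.
case: h => a b c' n; rewrite /Ghmul /= sgnz0; congr MkGh; try ring.
by congr frac; ring.
Qed.

Lemma Gh_mulr1 g : 0 <= gc g < 1 -> Ghmul g Gh1 = g.
Proof.
case: g => a b c n /= hc; rewrite /Ghmul /Gh1 /= !mulr0 !addr0 frac_small //.
Qed.

Lemma Gh_mul1' g : 0 <= gc g < 1 -> Ghmul Gh1 g = g.
Proof.
case: g => a b c n /= hc; rewrite /Ghmul /Gh1 /= sgnz0 !mul1r !add0r mul0r addr0 frac_small //.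
Qed.

Lemma conj_central h c : 0 <= c < 1 ->
  Ghmul (Ghmul h (MkGh 0 0 c 0)) (Ghinv h) = MkGh 0 0 c 0.
Proof.
move=> hc; rewrite -central_comm Gh_assoc Gh_mulV Gh_mulr1 //.
Qed.

Lemma comm_central h c : Gcomm (MkGh 0 0 c 0) h = Gh1.
Proof.
rewrite /Gcomm central_comm Gh_assoc -(Gh_assoc (MkGh 0 0 c 0)) Gh_mulV Gh_mul1'.
  exact: Gh_mulV.
by rewrite /= frac_ge0 frac_lt1.
Qed.


Section Part3.
Variable p : nat.
Hypothesis hp : prime p.

Definition prep (c : rat) : rat :=
  proj1_sig (constructive_indefinite_description _ (Spec_ex hp c)).

Lemma prepP c : Spec p c (prep c).
Proof. exact: proj2_sig. Qed.

Definition iota (g : Gh) : rat := prep (gc g).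

Lemma Zinvp_Zloc2 y : p <> 2%N -> Zinvp p y -> Zloc 2 y.
Proof.
move=> hp2 /(ZinvpP hp) [n [k ->]]; apply/ZlocP; exists n, (p ^ k)%:Z; split.
  rewrite /= Euclid_dvdX // dvdn_prime2 //; apply/negP => /andP [/eqP e _]; by apply: hp2.
by rewrite pmulrn.
Qed.

Lemma Spec_0 c : Zloc p c -> Spec p c 0.
Proof.
move=> hc; split; [by rewrite lexx ltr01 | | by rewrite subr0].
by apply: Zinvp_int; rewrite rpred0.
Qed.

Lemma iota_props : p <> 2%N ->
  [/\ is_hom_on Ghmul (PG p 2) QZadd iota,
      (forall g, PG p 2 g -> ZinvpZ p (iota g)),
      (forall y, ZinvpZ p y -> exists g, PG p 2 g /\ iota g = y)
    & (forall g, PG p 2 g -> (iota g = 0 <-> PG p 3 g))].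
Proof.
move=> hp2; split.
- move=> g h /PG2E [_ ea _ _] _; rewrite /iota /QZadd /= ea mul0r addr0.
  apply: (Spec_uniq hp (prepP _)).
  have [r1 i1 l1] := prepP (gc g); have [r2 i2 l2] := prepP (gc h).
  split; first by rewrite frac_ge0 frac_lt1.
    by apply: (Zinvp_frac hp); apply: (ZinvpD hp).
  have -> : frac (gc g + gc h) - frac (prep (gc g) + prep (gc h)) =
    ((gc g - prep (gc g)) + (gc h - prep (gc h))) +
    ((frac (gc g + gc h) - (gc g + gc h)) - (frac (prep (gc g) + prep (gc h)) - (prep (gc g) + prep (gc h)))) by ring.
  apply: ZlocD => //; first exact: ZlocD.
  by apply: int_Zloc => //; apply: rpredB; apply: int_fracB.
- by move=> g _; have [r1 i1 _] := prepP (gc g).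
- move=> y [hy iy]; exists (MkGh 0 0 y 0); split.
    by apply/PG2E; split => //; apply: Ghat_mk => //; try exact: Zloc0; exact: (Zinvp_Zloc2 hp2 iy).
  rewrite /iota /=; apply: (Spec_uniq hp (prepP _)); split => //; rewrite subrr; exact: Zloc0.
- move=> g h2; rewrite (PG3E hp); split.
    move=> e; split => //; have [_ _ l] := prepP (gc g); by move: l; rewrite /iota in e; rewrite e subr0.
  move=> [_ hc]; rewrite /iota; apply: (Spec_uniq hp (prepP _)); exact: Spec_0.
Qed.
End Part3.

Unset Implicit Arguments.

Theorem lemma3p4 (p : nat) (hp : prime p) :
  (* (1) *)
  ((forall g, PG p 1 g <->
      [/\ Ghat g, Zloc 2 (ga g / 2), Zloc 2 (gb g / 2) & gn g = 0]) /\
   (exists f : Gh -> ('Z_2 * 'Z_2 * int)%type,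
      [/\ is_hom_on Ghmul Ghat +%R f,
          (forall y, exists g, Ghat g /\ f g = y)
        & (forall g, Ghat g -> (f g = 0 <-> PG p 1 g))])) /\
  (* (2) *)
  ((forall g, PG p 2 g <-> [/\ Ghat g, ga g = 0, gb g = 0 & gn g = 0]) /\
   (exists f : Gh -> SD,
      [/\ is_hom_on Ghmul Ghat SDmul f,
          (forall g, Ghat g -> SDcar (f g)),
          (forall u, SDcar u -> exists g, Ghat g /\ f g = u)
        & (forall g, Ghat g -> (f g = SD1 <-> PG p 2 g))])) /\
  (* (3) *)
  ((forall g, PG p 3 g <-> PG p 2 g /\ Zloc p (gc g)) /\
   (p = 2%N -> forall g, PG p 2 g -> PG p 3 g) /\
   (p <> 2%N -> exists f : Gh -> rat,
      [/\ is_hom_on Ghmul (PG p 2) QZadd f,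
          (forall g, PG p 2 g -> ZinvpZ p (f g)),
          (forall y, ZinvpZ p y -> exists g, PG p 2 g /\ f g = y)
        & (forall g, PG p 2 g -> (f g = 0 <-> PG p 3 g))]) /\
   (* consequences *)
   (p = 2%N -> exists f : Gh -> SD,
      [/\ is_hom_on Ghmul Ghat SDmul f,
          (forall g, Ghat g -> SDcar (f g)),
          (forall u, SDcar u -> exists g, Ghat g /\ f g = u)
        & (forall g, Ghat g -> (f g = SD1 <-> PG p 3 g))]) /\
   (p <> 2%N ->
      (forall g h, PG p 3 g -> Ghat h -> PG p 3 (Ghmul (Ghmul h g) (Ghinv h))) /\
      (forall g h, PG p 2 g -> Ghat h -> PG p 3 (Gcomm g h)) /\
      (exists pi : Gh -> SD,
        [/\ is_hom_on Ghmul Ghat SDmul pi,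
            (forall g, Ghat g -> SDcar (pi g)),
            (forall u, SDcar u -> exists g, Ghat g /\ pi g = u)
          & (forall g, Ghat g -> (pi g = SD1 <-> PG p 2 g))]) /\
      (exists iota : Gh -> rat,
        [/\ is_hom_on Ghmul (PG p 2) QZadd iota,
            (forall g, PG p 2 g -> ZinvpZ p (iota g)),
            (forall y, ZinvpZ p y -> exists g, PG p 2 g /\ iota g = y)
          & (forall g, PG p 2 g -> (iota g = 0 <-> PG p 3 g))]))).
Proof.
have P23 : p = 2%N -> forall g, PG p 2 g -> PG p 3 g.
  move=> e g h2; apply/(PG3E hp); split => //; rewrite e.
  by case/PG2E: h2 => [[]].
split; first exact: part1.
split; first exact: part2.
split; first exact: PG3E.
split; first exact: P23.
split; first by move=> hp2; exists (iota hp); exact: iota_props.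
split.
  move=> e; exists f2; have [h1 h2 h3 h4] := f2_props p; split => // g hg.
  rewrite h4 //; split; first exact: P23.
  by case/(PG3E hp).
move=> hp2; split.
  move=> g h /(PG3E hp) [h2 hc] hh.
  case/PG2E: (h2) => [[_ _ _ hc01] ea eb en].
  have eg : g = MkGh 0 0 (gc g) 0 by case: g ea eb en {h2 hc hc01} => a b c n /= -> -> ->.
  by rewrite eg conj_central // -eg; apply/(PG3E hp).
split.
  move=> g h h2 hh.
  case/PG2E: (h2) => [[_ _ _ hc01] ea eb en].
  have eg : g = MkGh 0 0 (gc g) 0 by case: g ea eb en {h2 hc01} => a b c n /= -> -> ->.
  rewrite eg comm_central; apply/(PG3E hp); split; last exact: Zloc0.
  by apply/PG2E; split => //; exact: Ghat1.
split; first by exists f2; exact: f2_props.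
by exists (iota hp); exact: iota_props.
Qed.
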